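(* Let $n\ge1$ and let $c\in\mathfrak{S}_{n+1}$ be a Coxeter element. For every $\boldsymbol\pi\in\mathcal{ST}(c)$, we have $\mathrm{rev}_n(\boldsymbol\pi)\in\mathcal{ST}(\mathrm{rev}_{n+1}(c))$.
   Context: Coxeter element of $\mathfrak{S}_{n+1}$: product of $s_1,\dots,s_n$ ($s_i=(i,i+1)$), each exactly once; it is a long cycle $(c_1=1<c_2<\dots<c_m=n+1>c_{m+1}>\dots>c_{n+1})$, with $\mathbf L_c=\{c_2,\dots,c_{m-1}\}$, $\mathbf R_c=\{c_{m+1},\dots,c_{n+1}\}$. $\mathrm{rev}_{n+1}(c)=wcw^{-1}$ where $w\in\mathfrak{S}_{n+1}$, $w(i)=n+2-i$. For an $n$-tuple of partitions $\boldsymbol\pi=(\pi^1,\dots,\pi^n)$, $\mathrm{rev}_n(\boldsymbol\pi)=(\pi^n,\pi^{n-1},\dots,\pi^1)$. Storability: partitions are weakly decreasing sequences of nonnegative integers with finitely many nonzero terms. A pair $(\lambda,\mu)$ is storable if $\lambda_i\ge\mu_i\ge\lambda_{i+1}$ for all $i\ge1$. A triple $(\lambda,\mu,\nu)$ is $(\boxplus,\boxplus)$-storable if $(\lambda,\mu)$ and $(\nu,\mu)$ are storable; $(\boxplus,\boxminus)$-storable if $(\lambda,\mu)$ and $(\mu,\nu)$ are; $(\boxminus,\boxplus)$-storable if $(\mu,\lambda)$ and $(\nu,\mu)$ are; $(\boxminus,\boxminus)$-storable if $(\mu,\lambda)$ and $(\mu,\nu)$ are. For $\boldsymbol\pi=(\pi^1,\dots,\pi^n)$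 set $\pi^0=\pi^{n+1}=(0)$; $\boldsymbol\pi$ is $X$-storable at $i$ if $(\pi^{i-1},\pi^i,\pi^{i+1})$ is $X$-storable. For $\mathbf A\subset\mathbb{Z}$, $\mathbf A[-1]=\{a-1:a\in\mathbf A\}$. With $\mathbf L=\mathbf L_c\cup\{1\}$, $\mathbf R=\mathbf R_c\cup\{n+1\}$, $\boldsymbol\pi$ is $c$-storable ($\boldsymbol\pi\in\mathcal{ST}(c)$) if for every $i\in\{1,\dots,n\}$: it is $(\boxplus,\boxplus)$-storable at $i$ if $i\notin\mathbf L\cup\mathbf R[-1]$; $(\boxplus,\boxminus)$-storable at $i$ if $i\in\mathbf R[-1]\setminus\mathbf L$; $(\boxminus,\boxplus)$-storable at $i$ if $i\in\mathbf L\setminus\mathbf R[-1]$; $(\boxminus,\boxminus)$-storable at $i$ if $i\in\mathbf L\cap\mathbf R[-1]$; and $\pi^k=(0)$ for $k\notin\{\min\mathbf L,\dots,\max\mathbf R\}$. *)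

(* Defs.v *)
From mathcomp Require Import all_boot all_order all_fingroup.
Set Implicit Arguments. Unset Strict Implicit. Unset Printing Implicit Defensive.

(* Permutations of {1,...,n+1} are represented as 'S_(n.+1), the point
   k in {1,...,n+1} being the ordinal k-1. *)

Definition stransp (n i : nat) : 'S_(n.+1) :=
  tperm (inord i.-1 : 'I_(n.+1)) (inord i).

Definition is_coxeter (n : nat) (c : 'S_(n.+1)) : Prop :=
  exists s : seq nat, perm_eq s (iota 1 n) /\
    c = (\prod_(i <- s) stransp n i)%g.

Definition cyc (n : nat) (c : 'S_(n.+1)) (k : nat) : nat :=
  (val ((c ^+ k)%g ord0)).+1.

(* Writing the long cycle as (c_1 = 1, c_2, ..., c_{n+1}) with c_{j+1} = c(c_j)
   = c^j(1), and c_m = n+1: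
   L_c = {c_2,...,c_{m-1}},  R_c = {c_{m+1},...,c_{n+1}}. *)
Definition Lc (n : nat) (c : 'S_(n.+1)) (j : nat) : Prop :=
  exists k, 0 < k /\ (forall k', k' <= k -> cyc c k' <> n.+1) /\ cyc c k = j.

Definition Rc (n : nat) (c : 'S_(n.+1)) (j : nat) : Prop :=
  exists k, (exists m, m < k /\ cyc c m = n.+1) /\
            (forall k', 0 < k' <= k -> cyc c k' <> 1) /\ cyc c k = j.

Definition Lset (n : nat) (c : 'S_(n.+1)) (j : nat) : Prop := j = 1 \/ Lc c j.
Definition Rset (n : nat) (c : 'S_(n.+1)) (j : nat) : Prop := j = n.+1 \/ Rc c j.

(* w(i) = n+2-i, rev_{n+1}(c) = w c w^{-1} *)
Definition wrev (n : nat) : 'S_(n.+1) := perm (@rev_ord_inj n.+1).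
Definition revc (n : nat) (c : 'S_(n.+1)) : 'S_(n.+1) :=
  (wrev n * c * (wrev n)^-1)%g.

(* A partition lambda = (lambda_1, lambda_2, ...) is encoded as a function
   l : nat -> nat with l i = lambda_{i+1}. *)
Definition is_partition (l : nat -> nat) : Prop :=
  (forall i, l i.+1 <= l i) /\ (exists N, forall i, N <= i -> l i = 0).

Definition zero_partition : nat -> nat := fun _ => 0.

Definition storable (l m : nat -> nat) : Prop :=
  forall i, m i <= l i /\ l i.+1 <= m i.

Inductive box := Bplus | Bminus.

Definition storable3 (a b : box) (l m r : nat -> nat) : Prop :=
  (match a with Bplus => storable l m | Bminus => storable m l end) /\
  (match b with Bplus => storable r m | Bminus => storable m r end).

(* An n-tuple of partitions (pi^1,...,pi^n) is encoded as pi : nat -> nat -> nat,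
   pi k being pi^k for 1 <= k <= n (other values are irrelevant);
   ext sets pi^0 = pi^{n+1} = (0). *)
Definition ext (n : nat) (pi : nat -> nat -> nat) (k : nat) : nat -> nat :=
  if (1 <= k <= n) then pi k else zero_partition.

Definition storable_at (n : nat) (a b : box) (pi : nat -> nat -> nat) (i : nat) :=
  storable3 a b (ext n pi i.-1) (ext n pi i) (ext n pi i.+1).

Definition tuple_of_partitions (n : nat) (pi : nat -> nat -> nat) : Prop :=
  forall k, 1 <= k <= n -> is_partition (pi k).

Definition ST (n : nat) (c : 'S_(n.+1)) (pi : nat -> nat -> nat) : Prop :=
  tuple_of_partitions n pi /\
  (forall i, 1 <= i <= n ->
     (~ Lset c i /\ ~ Rset c i.+1 -> storable_at n Bplus Bplus pi i) /\
     (Rset c i.+1 /\ ~ Lset c i -> storable_at n Bplus Bminus pi i) /\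
     (Lset c i /\ ~ Rset c i.+1 -> storable_at n Bminus Bplus pi i) /\
     (Lset c i /\ Rset c i.+1 -> storable_at n Bminus Bminus pi i)) /\
  (forall k, 1 <= k <= n ->
     ((forall l, Lset c l -> k < l) \/ (forall r, Rset c r -> r < k)) ->
     pi k = zero_partition).

Definition revn (n : nat) (pi : nat -> nat -> nat) : nat -> nat -> nat :=
  fun k => pi (n.+1 - k).

(* Main.v *)
Require Import Defs.
From mathcomp Require Import all_boot all_order all_fingroup.
From mathcomp Require Import zify.
Set Implicit Arguments. Unset Strict Implicit. Unset Printing Implicit Defensive.

Definition Pr (n : nat) (s : seq nat) : 'S_(n.+1) := (\prod_(i <- s) stransp n i)%g.

Lemma stransp_pres n a e (x : 'I_n.+1) :
  1 <= a <= n -> a != e -> (stransp n a x < e) = (x < e).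
Proof.
move=> /andP[a1 an] ae; rewrite /stransp.
case: tpermP => [->|->|_ _] //; rewrite !inordK; try lia;
  apply/idP/idP; lia.
Qed.

Lemma Pr_pres n s e (x : 'I_n.+1) : all (fun a => 1 <= a <= n) s -> e \notin s ->
  (Pr n s x < e) = (x < e).
Proof.
elim: s x => [|a s IH] x /=; first by rewrite /Pr big_nil perm1.
move=> /andP[ha hs]; rewrite inE negb_or => /andP[ae es].
rewrite /Pr big_cons permM -/(Pr n s) IH // stransp_pres // eq_sym; exact: ae.
Qed.

Lemma PrX_pres n s e (x : 'I_n.+1) i : all (fun a => 1 <= a <= n) s -> e \notin s ->
  (((Pr n s) ^+ i)%g x < e) = (x < e).
Proof.
move=> hs es; elim: i x => [|i IH] x; first by rewrite expg0 perm1.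
by rewrite expgS permM IH Pr_pres.
Qed.

Lemma card_porbits1 n : #|porbits (1 : 'S_(n.+1))%g| = n.+1.
Proof.
rewrite /porbits card_imset ?card_ord // => x y /eqP.
by rewrite eq_porbit_mem => /porbitP [i]; rewrite expg1n perm1.
Qed.

Lemma card_porbitsPr n s : uniq s -> all (fun a => 1 <= a <= n) s ->
  #|porbits (Pr n s)| + size s = n.+1.
Proof.
elim: s => [|a s IH] /=; first by rewrite /Pr big_nil addn0 card_porbits1.
move=> /andP[as_ us] /andP[ha hs].
have := porbits_mul_tperm (Pr n s) (inord a.-1) (inord a).
rewrite /= /Pr big_cons -/(Pr n s) /stransp.
have -> : (inord a.-1 : 'I_n.+1) \notin porbit (Pr n s) (inord a).
  apply/negP => /porbitP [i H].
  have := PrX_pres (inord a) i hs as_.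
  rewrite -H !inordK; lia.
have -> : (inord a.-1 : 'I_n.+1) != inord a.
  by apply/eqP => /(congr1 (@nat_of_ord _)); rewrite !inordK; lia.
have := IH us hs; move=> h1 h2; rewrite /= addn2 addn1 in h2; rewrite -[RHS]h1 addnS -addSn; congr (_ + _); case: h2 => h2; exact: h2.
Qed.

Lemma cox_orbit n (c : 'S_(n.+1)) : is_coxeter c -> exists i, (c ^+ i)%g ord0 = ord_max.
Proof.
move=> [s [ps ->]]; rewrite -/(Pr n s).
have us : uniq s by rewrite (perm_uniq ps) iota_uniq.
have hs : all (fun a => 1 <= a <= n) s.
  by apply/allP => a; rewrite (perm_mem ps) mem_iota; lia.
have := card_porbitsPr us hs; rewrite (perm_size ps) size_iota => H.
have /cards1P [X hX] : #|porbits (Pr n s)| == 1 by apply/eqP; lia.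
have h0 : porbit (Pr n s) ord0 \in porbits (Pr n s) by apply: imset_f.
have h1 : porbit (Pr n s) ord_max \in porbits (Pr n s) by apply: imset_f.
rewrite hX in_set1 in h0; rewrite hX in_set1 in h1.
have : ord_max \in porbit (Pr n s) ord0.
  by rewrite -eq_porbit_mem (eqP h0) (eqP h1).
by move/porbitP => [i ->]; exists i.
Qed.

Local Notation fv d t := (val ((d ^+ t)%g ord0)).

Lemma struct n (c : 'S_(n.+1)) : 1 <= n -> is_coxeter c ->
  exists p m, [/\ 0 < m, m < p, (forall t, fv c (t + p) = fv c t),
    (forall t, (fv c t == 0) = (p %| t)) & (forall t, (fv c t == n) = (t %% p == m))].
Proof.
move=> n1 cox.
have ex : exists k, (0 < k) && ((c ^+ k)%g ord0 == ord0).
  by exists (#[c]%g); rewrite order_gt0 expg_order perm1 eqxx.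
case: (ex_minnP ex) => p /andP[p0 /eqP cp] pmin.
have per : forall t, (c ^+ (t + p))%g ord0 = (c ^+ t)%g ord0.
  by move=> t; rewrite addnC expgD permM cp.
have permod : forall t, (c ^+ t)%g ord0 = (c ^+ (t %% p))%g ord0.
  move=> t; rewrite {1}(divn_eq t p); elim: (t %/ p) => [|q IH].
    by rewrite mul0n add0n.
  by rewrite mulSn -addnA [p + _]addnC per.
have inj : forall a b, a < p -> b < p -> (c ^+ a)%g ord0 = (c ^+ b)%g ord0 -> a = b.
  have aux : forall a b, a < b -> b < p -> (c ^+ a)%g ord0 = (c ^+ b)%g ord0 -> False.
    move=> a b ab bp H.
    have e1 : (c ^+ b)%g ord0 = (c ^+ a)%g ((c ^+ (b - a))%g ord0).
      by rewrite -permM -expgD subnK // ltnW.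
    rewrite e1 in H; move/perm_inj: H => /esym/eqP H.
    have := pmin (b - a); rewrite H andbT; lia.
  move=> a b ap bp H; case: (ltngtP a b) => // ab.
    by case: (aux a b).
  by case: (aux b a).
have [i hi] := cox_orbit cox.
exists p, (i %% p).
have H0 : forall t, (fv c t == 0) = (p %| t).
  move=> t; rewrite permod /dvdn.
  apply/idP/idP => [/eqP h|/eqP h].
    apply/eqP; apply: (inj _ 0); rewrite ?ltn_mod //.
    by apply: val_inj; rewrite h expg0 perm1.
  by rewrite h expg0 perm1.
have Hn : forall t, (fv c t == n) = (t %% p == i %% p).
  move=> t; rewrite permod.
  apply/idP/idP => [/eqP h|/eqP h].
    apply/eqP; apply: inj; rewrite ?ltn_mod //.
    by apply: val_inj; rewrite -(permod i) hi h.
  by rewrite h -(permod i) hi.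
split => //.
- have := Hn 0; rewrite mod0n expg0 perm1 /=; case: (i %% p) => //=; lia.
- by rewrite ltn_mod.
- by move=> t; rewrite per.
Qed.

Lemma wrevE n (y : 'I_n.+1) : val (wrev n y) = n - val y.
Proof. by rewrite /wrev permE /= subSS. Qed.

Lemma wrevVE n (y : 'I_n.+1) : val ((wrev n)^-1 y)%g = n - val y.
Proof.
rewrite -{2}(permKV (wrev n) y) wrevE.
by rewrite subKn // -ltnS; exact: ltn_ord.
Qed.

Lemma g_eq n (c : 'S_(n.+1)) m : fv c m = n ->
  forall k, fv (revc c) k = n - fv c (m + k).
Proof.
move=> hm k.
have -> : revc c = (c ^ ((wrev n)^-1))%g by rewrite /revc /conjg invgK mulgA.
rewrite -conjXg /conjg invgK !permM wrevVE.
have -> : wrev n ord0 = (c ^+ m)%g ord0 by apply: ord_inj; rewrite wrevE /= subn0; exact: (esym hm).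
by rewrite -permM -expgD.
Qed.

Lemma LcE n (d : 'S_(n.+1)) p m j : (forall t, (fv d t == n) = (t %% p == m)) -> m < p ->
  (Lc d j <-> exists k, 0 < k < m /\ (fv d k).+1 = j).
Proof.
move=> Hn mp; rewrite /Lc /cyc; split.
- move=> [k [k0 [hk hj]]]; exists k; split => //; apply/andP; split => //.
  rewrite ltnNge; apply/negP => mk; apply: (hk m mk).
  by have := Hn m; rewrite modn_small // eqxx => /eqP ->.
- move=> [k [/andP[k0 km] hj]]; exists k; do 2 split => //.
  move=> k' kk /eqP; rewrite eqSS Hn modn_small; [move/eqP; lia | lia].
Qed.

Lemma RcE n (d : 'S_(n.+1)) p m j : (forall t, (fv d t == 0) = (p %| t)) ->
  (forall t, (fv d t == n) = (t %% p == m)) -> m < p ->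
  (Rc d j <-> exists k, m < k < p /\ (fv d k).+1 = j).
Proof.
move=> H0 Hn mp; rewrite /Rc /cyc; split.
- move=> [K [[m' [mK hm']] [hk hj]]]; exists K; split => //.
  have Kp : K < p.
    rewrite ltnNge; apply/negP => pK; apply: (hk p); first lia.
    by congr S; apply/eqP; rewrite H0 dvdnn.
  have : m' %% p == m by rewrite -Hn; apply/eqP; case: hm' => h; exact: h.
  rewrite modn_small; [move/eqP; lia | lia].
- move=> [K [/andP[mK Kp] hj]]; exists K; split.
    exists m; split => //; congr S; apply/eqP; rewrite Hn modn_small //.
  split => // k' /andP[k0 kK] /eqP; rewrite eqSS H0 /dvdn modn_small; [move/eqP; lia|lia].
Qed.

Lemma revLR n (c : 'S_(n.+1)) i : 1 <= n -> is_coxeter c -> 1 <= i <= n.+1 ->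
  (Lset (revc c) i <-> Rset c (n.+2 - i)) /\ (Rset (revc c) i <-> Lset c (n.+2 - i)).
Proof.
move=> n1 cox hi.
have [p [m [m0 mp per H0 Hn]]] := struct n1 cox.
have hm : fv c m = n by apply/eqP; rewrite Hn modn_small.
have gE := g_eq hm.
have fle : forall t, fv c t <= n by move=> t; rewrite -ltnS ltn_ord.
have H0G : forall t, (fv (revc c) t == 0) = (p %| t).
  move=> t; rewrite gE.
  have -> : (n - fv c (m + t) == 0) = (fv c (m + t) == n).
    by have := fle (m + t); move=> hh; apply/idP/idP => /eqP; lia.
  rewrite Hn -{2}(modn_small mp) -[X in _ == X %% p]addn0 (eqn_modDl m t 0) mod0n.
  by [].
have HnG : forall t, (fv (revc c) t == n) = (t %% p == p - m).
  move=> t; rewrite gE.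
  have -> : (n - fv c (m + t) == n) = (fv c (m + t) == 0).
    by have := fle (m + t); move=> hh; apply/idP/idP => /eqP; lia.
  rewrite H0 /dvdn -(modn_small (_ : p - m < p)); last lia.
  by rewrite -(eqn_modDl m) subnKC ?modnn // ltnW.
have pm : p - m < p by lia.
split; split.
- case => [->|]; first by left; lia.
  move/(proj1 (@LcE _ _ _ _ _ HnG pm)) => [k [hk hi']]; right.
  apply (proj2 (@RcE _ _ _ _ _ H0 Hn mp)); exists (m + k); split; first lia.
  rewrite gE in hi'; have := fle (m + k); lia.
- case => [h|]; first by left; lia.
  move/(proj1 (@RcE _ _ _ _ _ H0 Hn mp)) => [K [hK hj]]; right.
  apply (proj2 (@LcE _ _ _ _ _ HnG pm)); exists (K - m); split; first lia.
  rewrite gE subnKC; last lia.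
  have := fle K; lia.
- case => [->|]; first by left; lia.
  move/(proj1 (@RcE _ _ _ _ _ H0G HnG pm)) => [K [hK hi']]; right.
  apply (proj2 (@LcE _ _ _ _ _ Hn mp)); exists (K - (p - m)); split; first lia.
  rewrite gE (_ : m + K = (K - (p - m)) + p) in hi'; last lia.
  rewrite per in hi'; have := fle (K - (p - m)); lia.
- case => [h|]; first by left; lia.
  move/(proj1 (@LcE _ _ _ _ _ Hn mp)) => [k [hk hj]]; right.
  apply (proj2 (@RcE _ _ _ _ _ H0G HnG pm)); exists (k + (p - m)); split; first lia.
  rewrite gE (_ : m + (k + (p - m)) = k + p); last lia.
  rewrite per; have := fle k; lia.
Qed.

Lemma ext_rev n pi k : k <= n.+1 -> ext n (revn n pi) k = ext n pi (n.+1 - k).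
Proof.
move=> kn; rewrite /ext /revn.
case: (boolP (1 <= k <= n)) => h1; case: (boolP (1 <= n.+1 - k <= n)) => h2 //; lia.
Qed.

Lemma storable3_swap a b l m r : storable3 a b l m r <-> storable3 b a r m l.
Proof. by rewrite /storable3; split => -[]. Qed.

Theorem lemma4p9 (n : nat) (c : 'S_(n.+1)) (pi : nat -> nat -> nat) :
  1 <= n -> is_coxeter c -> ST c pi -> ST (revc c) (revn n pi).
Proof.
move=> n1 cox [tp [hst hz]]; split; [|split].
- move=> k hk; rewrite /revn; apply: tp; lia.
- move=> i hi.
  have [hL _] := revLR (i := i) n1 cox (ltac:(lia)).
  have [_ hR] := revLR (i := i.+1) n1 cox (ltac:(lia)).
  have e1 : n.+2 - i = (n.+1 - i).+1 by lia.
  have e2 : n.+2 - i.+1 = n.+1 - i by lia.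
  rewrite e1 in hL; rewrite e2 in hR.
  have [A [B [C D]]] := hst (n.+1 - i) (ltac:(lia)).
  have sw : forall a b, storable_at n b a pi (n.+1 - i) -> storable_at n a b (revn n pi) i.
    move=> a b; rewrite /storable_at !ext_rev; try lia.
    rewrite (_ : n.+1 - i.-1 = (n.+1 - i).+1); last lia.
    rewrite (_ : n.+1 - i.+1 = (n.+1 - i).-1); last lia.
    by move/storable3_swap.
  split; [|split; [|split]] => -[h1 h2]; apply: sw.
  + apply: A; split => [/hR|/hL]; tauto.
  + apply: C; split => [|/hL]; [exact/hR|tauto].
  + apply: B; split => [|/hR]; [exact/hL|tauto].
  + apply: D; split; [exact/hR|exact/hL].
- move=> k hk [h|h].
  + by have := h 1 (or_introl erefl); lia.
  + by have := h n.+1 (or_introl erefl); lia.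
Qed.
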